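(* For a barcode $f$ and any integer $p \ge 1$, $B(f^{\wedge p})$ and $D(f^{\wedge p})$ can be obtained from $C^{\wedge}(f)$: if $f, f'$ are barcodes with $C^{\wedge}(f) = C^{\wedge}(f')$, then $B(f^{\wedge p}) = B(f'^{\wedge p})$ and $D(f^{\wedge p}) = D(f'^{\wedge p})$ for all $p \ge 1$.
   Context: A barcode is a finite formal sum $f = \sum_{i=1}^n x^{\alpha_i}y^{\ell_i}$ with $n\ge0$, $\alpha_i \in \mathbb{R}$, $\ell_i \in \mathbb{R}_{>0}$ (a finite multiset of bars). Its $p$-th exterior power ($p\ge1$) is $f^{\wedge p} = \sum_{1\le i_1<\cdots<i_p\le n} x^{\alpha_{i_1}+\cdots+\alpha_{i_p}}y^{\min\{\ell_{i_1},\ldots,\ell_{i_p}\}}$ (zero if $p>n$). The birth series is $B(f) = \sum_i x^{\alpha_i}$, the death series $D(f) = \sum_i x^{\alpha_i+\ell_i}$, the critical series $C(f) = B(f) - D(f)$ (finite integer combinations of symbols $x^g$, $g\in\mathbb{R}$), and $C^{\wedge}(f) = \sum_{p\ge1} C(f^{\wedge p})z^p$ with $z$ an indeterminate. *)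

(* Defs.v *)
From HB Require Import structures.
From mathcomp Require Import all_boot all_order all_algebra.
From mathcomp Require Import reals.
Set Implicit Arguments. Unset Strict Implicit. Unset Printing Implicit Defensive.
Import Order.TTheory GRing.Theory Num.Theory.
Local Open Scope ring_scope.

Section Barcodes.
Variable R : realType.

(* A bar x^alpha y^ell is the pair (alpha, ell); a barcode is a finite
   multiset of bars, represented as a list (order irrelevant for all
   notions below), with all lengths ell > 0. *)
Definition bar := (R * R)%type.
Definition is_barcode (f : seq bar) : bool := all (fun b => 0 < b.2) f.

Fixpoint choose (p : nat) (s : seq bar) : seq (seq bar) :=
  match p, s with
  | 0%N, _ => [:: [::]]
  | p'.+1, [::] => [::]
  | p'.+1, x :: t => map (cons x) (choose p' t) ++ choose p t
  end.

Definition wedge_bar (l : seq bar) : bar :=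
  match l with
  | [::] => (0, 0)
  | x :: t => (x.1 + \sum_(b <- t) b.1, foldr Num.min x.2 (map snd t))
  end.

(* p-th exterior power f^{/\ p} (meaningful for p >= 1; zero if p > n) *)
Definition wedge (p : nat) (f : seq bar) : seq bar := map wedge_bar (choose p f).

(* A finite integer combination of symbols x^g is represented by its
   coefficient function R -> int (finitely supported). *)
Definition series := R -> int.

Definition birth (f : seq bar) : series :=
  fun g => (count (fun b => b.1 == g) f)%:Z.
Definition death (f : seq bar) : series :=
  fun g => (count (fun b => b.1 + b.2 == g) f)%:Z.
Definition crit (f : seq bar) : series := fun g => birth f g - death f g.

(* C^/\(f) = sum_{p>=1} C(f^{/\p}) z^p, as its coefficient sequence in z
   (coefficient of z^0 is 0). *)
Definition crit_wedge (f : seq bar) : nat -> series :=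
  fun p => if p is 0%N then (fun _ => 0) else crit (wedge p f).

End Barcodes.

(* Main.v *)
Require Import Defs.
From HB Require Import structures.
From mathcomp Require Import all_boot all_order all_algebra.
From mathcomp Require Import reals.
From Stdlib Require List FunctionalExtensionality.
From mathcomp Require Import zify.
Import Order.TTheory GRing.Theory Num.Theory.
Local Open Scope ring_scope.
Set Implicit Arguments. Unset Strict Implicit.

Fixpoint chs {T : Type} (p : nat) (s : seq T) : seq (seq T) :=
  match p, s with
  | 0%N, _ => [:: [::]]
  | p'.+1, [::] => [::]
  | p'.+1, x :: t => map (cons x) (chs p' t) ++ chs p t
  end.

Lemma choose_chs (R : realType) (p : nat) (s : seq (bar R)) : Defs.choose p s = chs p s.
Proof. by elim: s p => [|x s IH] [|p] //=; rewrite !IH. Qed.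

Lemma chs_big {T : Type} (p : nat) (s : seq T) : (size s < p)%N -> chs p s = [::].
Proof.
elim: s p => [|x s IH] [|p] //= Hp.
by rewrite !IH //; apply: ltnW.
Qed.

Lemma chs_size {T : Type} (p : nat) (s : seq T) l : List.In l (chs p s) -> size l = p.
Proof.
elim: s p l => [|x s IH] [|p] l //=; try by case=> [<-|[]].
move=> H; case: (List.in_app_or _ _ _ H) => [|/IH //].
by move=> /(List.in_map_iff _ _ _) [l' [<- /IH /= ->]].
Qed.

Lemma chs_all {T : Type} (P : pred T) (p : nat) (s : seq T) l :
  all P s -> List.In l (chs p s) -> all P l.
Proof.
elim: s p l => [|x s IH] [|p] l //=; try by move=> _ [<-|[]].
move=> /andP[Px Ps] H; case: (List.in_app_or _ _ _ H) => [|/IH -> //].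
by move=> /(List.in_map_iff _ _ _) [l' [<- /IH /= ->]]; rewrite ?Px.
Qed.

Definition ssum (R : realType) (p : nat) (s : seq R) : seq R :=
  map (fun l => \sum_(x <- l) x) (chs p s).
Arguments ssum {R}.

Lemma ssum0 (R : realType) (s : seq R) : ssum 0 s = [:: 0].
Proof. by case: s => [|x s]; rewrite /ssum /= big_nil. Qed.

Lemma ssumS (R : realType) q x (s : seq R) :
  ssum q.+1 (x :: s) = map (fun y => x + y) (ssum q s) ++ ssum q.+1 s.
Proof.
rewrite /ssum /= map_cat -!map_comp; congr (_ ++ _).
by apply: eq_map => l /=; rewrite big_cons.
Qed.

Definition PP (R : realType) (s t : seq R) := forall p, perm_eq (ssum p s) (ssum p t).
Arguments PP {R}.

Lemma PP_cons (R : realType) x (s t : seq R) : PP s t -> PP (x :: s) (x :: t).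
Proof.
move=> H [|q]; first by rewrite !ssum0.
by rewrite !ssumS perm_cat // perm_map.
Qed.

Lemma PP_swap (R : realType) x y (s : seq R) : PP (x :: y :: s) (y :: x :: s).
Proof.
move=> [|[|r]]; first by rewrite !ssum0.
  by rewrite !ssumS !ssum0 /=; apply/permP => a /=; rewrite addnCA.
rewrite !ssumS !map_cat.
have -> : [seq x + y0 | y0 <- [seq y + y1 | y1 <- ssum r s]]
   = [seq y + y0 | y0 <- [seq x + y1 | y1 <- ssum r s]].
  by rewrite -!map_comp; apply: eq_map => z /=; rewrite addrCA.
by apply/permP => a; rewrite !count_cat; lia.
Qed.

Lemma PP_trans (R : realType) (s t u : seq R) : PP s t -> PP t u -> PP s u.
Proof. by move=> H1 H2 p; apply: perm_trans (H1 p) (H2 p). Qed.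

Lemma PP_sym (R : realType) (s t : seq R) : PP s t -> PP t s.
Proof. by move=> H p; rewrite perm_sym. Qed.

Lemma PP_move (R : realType) x (t1 t2 : seq R) : PP (t1 ++ x :: t2) (x :: t1 ++ t2).
Proof.
elim: t1 => [|y t1 IH] /=; first by move=> p.
apply: PP_trans (PP_cons y IH) _; exact: PP_swap.
Qed.

Lemma perm_PP (R : realType) (s t : seq R) : perm_eq s t -> PP s t.
Proof.
elim: s t => [|x s IH] t H.
  by move: (perm_size H); case: t H => // _ _ p.
have Hx : x \in t by rewrite -(perm_mem H) mem_head.
move: H; case/splitPr: Hx => t1 t2 H.
have H2 : perm_eq s (t1 ++ t2).
  rewrite -(perm_cons x); apply: perm_trans H _.
  apply/permP => a; rewrite /= !count_cat /=; lia.
apply: PP_trans (PP_cons x (IH _ H2)) _; apply: PP_sym; exact: PP_move.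
Qed.

Lemma chs_sizeE {T : eqType} (p : nat) (s : seq T) l : l \in chs p s -> size l = p.
Proof.
elim: s p l => [|x s IH] [|p] l //=; rewrite ?mem_seq1 ?mem_cat; try by move/eqP->.
case/orP=> [/mapP [l' /IH Hl ->] /= | /IH //]; by rewrite Hl.
Qed.

Lemma chs_allE {T : eqType} (P : pred T) (p : nat) (s : seq T) l :
  all P s -> l \in chs p s -> all P l.
Proof.
elim: s p l => [|x s IH] [|p] l //=; rewrite ?mem_seq1 ?mem_cat; try by move=> _ /eqP->.
move=> /andP[Px Ps]; case/orP=> [/mapP [l' /(IH _ _ Ps) Hl ->] /= | /(IH _ _ Ps) //].
by rewrite Px Hl.
Qed.

Lemma map_chs {T U : Type} (g : T -> U) p s : map (map g) (chs p s) = chs p (map g s).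
Proof.
elim: s p => [|x s IH] [|p] //=.
rewrite map_cat -!IH -!map_comp; congr (_ ++ _).
Qed.

Lemma ssum_min (R : realType) (s : seq R) : sorted <=%R s ->
  forall p y, y \in ssum p s -> \sum_(z <- take p s) z <= y.
Proof.
elim: s => [|x s IH] Hs [|q] y.
- by rewrite ssum0 inE => /eqP ->; rewrite big_nil.
- by [].
- by rewrite ssum0 inE take0 big_nil => /eqP ->.
have Hs' := path_sorted Hs.
rewrite ssumS mem_cat => /orP [/mapP [y' Hy' ->] | Hy].
  by rewrite /= big_cons; apply: lerD; [exact: lexx | exact: IH Hs' _ _ Hy'].
have := IH Hs' _ _ Hy.
case: (ltnP q (size s)) => Hq; last first.
  by move: Hy; rewrite /ssum chs_big.
rewrite (take_nth 0 Hq) -cats1 big_cat big_seq1 /= big_cons => H.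
apply: le_trans H; rewrite addrC; apply: lerD; last exact: lexx.
have Hall : all (fun z => x <= z) s by apply: (order_path_min le_trans Hs).
by apply: (allP Hall); apply: mem_nth.
Qed.

Lemma take_mem (R : realType) (s : seq R) p : (p <= size s)%N ->
  \sum_(z <- take p s) z \in ssum p s.
Proof.
elim: s p => [|x s IH] [|q] //= Hq; rewrite ?ssum0 ?take0 ?big_nil ?mem_seq1 //.
by rewrite ssumS mem_cat big_cons map_f ?IH.
Qed.

Lemma wedge_fst (R : realType) (f : seq (bar R)) p :
  map fst (wedge p f) = ssum p (map fst f).
Proof.
rewrite /wedge /ssum choose_chs -map_chs -!map_comp; apply: eq_map => l /=.
case: l => [|b t] /=; first by rewrite big_nil.
by rewrite big_cons big_map.
Qed.

Lemma birthE (R : realType) (f : seq (bar R)) p g :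
  birth (wedge p f) g = (count (pred1 g) (ssum p (map fst f)))%:Z.
Proof. by rewrite -wedge_fst (count_map fst (pred1 g) (wedge p f)). Qed.

Lemma wedge_pos (R : realType) (f : seq (bar R)) p : is_barcode f -> (1 <= p)%N ->
  forall b, b \in wedge p f -> 0 < b.2.
Proof.
move=> Hf Hp b /mapP [l Hl ->].
rewrite choose_chs in Hl.
have Hsz := chs_sizeE Hl.
have := chs_allE Hf Hl.
case: l Hl Hsz => [|c t] Hl Hsz; first by move: Hp; rewrite -Hsz.
move=> /= /andP [Hc Ht].
elim: t Ht {Hl Hsz} => [|d t IH] //= /andP [Hd Ht].
by rewrite lt_min Hd IH.
Qed.

Definition mm (R : realType) (f : seq (bar R)) p :=
  \sum_(z <- take p (sort <=%R (map fst f))) z.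

Lemma mm_low (R : realType) (f : seq (bar R)) p y :
  y \in ssum p (map fst f) -> mm f p <= y.
Proof.
move=> Hy; apply: ssum_min; first by apply: sort_sorted => a b; apply: le_total.
have HP : PP (map fst f) (sort <=%R (map fst f)).
  by apply: perm_PP; rewrite perm_sym perm_sort.
by rewrite -(perm_mem (HP p)).
Qed.

Lemma mm_in (R : realType) (f : seq (bar R)) p : (p <= size f)%N ->
  mm f p \in ssum p (map fst f).
Proof.
move=> Hp.
have HP : PP (map fst f) (sort <=%R (map fst f)).
  by apply: perm_PP; rewrite perm_sym perm_sort.
rewrite (perm_mem (HP p)); apply: take_mem.
by rewrite size_sort size_map.
Qed.

Lemma death0 (R : realType) (f : seq (bar R)) p g : is_barcode f -> (1 <= p)%N ->
  g <= mm f p -> death (wedge p f) g = 0.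
Proof.
move=> Hf Hp Hg; rewrite /death.
suff -> : count (fun b => b.1 + b.2 == g) (wedge p f) = 0%N by [].
apply/eqP; rewrite -leqn0 leqNgt -has_count; apply/hasPn => b Hb.
rewrite eq_sym lt_eqF //; apply: le_lt_trans Hg _.
apply: (@le_lt_trans _ _ b.1).
  by apply: mm_low; rewrite -wedge_fst map_f.
by rewrite ltrDl (wedge_pos Hf Hp).
Qed.

Lemma crit_low (R : realType) (f : seq (bar R)) p g : is_barcode f -> (1 <= p)%N ->
  g < mm f p -> crit (wedge p f) g = 0.
Proof.
move=> Hf Hp Hg; rewrite /crit (death0 Hf Hp (ltW Hg)) subr0 birthE.
suff -> : count (pred1 g) (ssum p (map fst f)) = 0%N by [].
apply/eqP; rewrite -leqn0 leqNgt -has_count; apply/hasPn => y Hy /=.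
by rewrite eq_sym lt_eqF //; apply: lt_le_trans Hg (mm_low Hy).
Qed.

Lemma crit_at (R : realType) (f : seq (bar R)) p : is_barcode f -> (1 <= p)%N ->
  (p <= size f)%N -> crit (wedge p f) (mm f p) != 0.
Proof.
move=> Hf Hp Hps; rewrite /crit (death0 Hf Hp (lexx _)) subr0 birthE.
have : (0 < count (pred1 (mm f p)) (ssum p (map fst f)))%N.
  by rewrite -has_count; apply/hasP; exists (mm f p); [exact: mm_in | rewrite /= eqxx].
by case: count.
Qed.

Lemma crit_big (R : realType) (f : seq (bar R)) p g : (size f < p)%N ->
  crit (wedge p f) g = 0.
Proof. by move=> H; rewrite /crit /wedge choose_chs chs_big. Qed.

Lemma size_le (R : realType) (f f' : seq (bar R)) :
  is_barcode f -> is_barcode f' -> crit_wedge f = crit_wedge f' ->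
  (size f <= size f')%N.
Proof.
move=> Hf Hf' Hc; rewrite leqNgt; apply/negP.
case E: (size f) => [|n] // H.
have := congr1 (fun F => F n.+1 (mm f n.+1)) Hc; rewrite /crit_wedge /=.
rewrite (crit_big _ H) => /eqP; apply/negP; apply: crit_at => //.
by rewrite E.
Qed.

Lemma mm_eq (R : realType) (f f' : seq (bar R)) :
  is_barcode f -> is_barcode f' -> crit_wedge f = crit_wedge f' ->
  size f = size f' -> forall p, (p <= size f)%N -> mm f p = mm f' p.
Proof.
move=> Hf Hf' Hc Hs [|q] Hq; first by rewrite /mm !take0 !big_nil.
have Ec := congr1 (fun F => F q.+1) Hc; rewrite /crit_wedge /= in Ec.
have Hq' : (q.+1 <= size f')%N by rewrite -Hs.
case: (ltgtP (mm f q.+1) (mm f' q.+1)) => // H.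
  have := crit_at Hf (isT : (1 <= q.+1)%N) Hq.
  by rewrite Ec (crit_low Hf' _ H).
have := crit_at Hf' (isT : (1 <= q.+1)%N) Hq'.
by rewrite -Ec (crit_low Hf _ H).
Qed.

Lemma prefix_eq (R : realType) (s s' : seq R) : size s = size s' ->
  (forall p, (p <= size s)%N -> \sum_(z <- take p s) z = \sum_(z <- take p s') z) ->
  s = s'.
Proof.
move=> Hsz H; apply: (eq_from_nth (x0 := 0) Hsz) => i Hi.
have Hi' : (i < size s')%N by rewrite -Hsz.
have := H i.+1 Hi.
rewrite (take_nth 0 Hi) (take_nth 0 Hi') -!cats1 !big_cat !big_seq1 (H i (ltnW Hi)).
by move/addrI.
Qed.

Theorem proposition13 (R : realType) (f f' : seq (R * R)%type) :
  is_barcode f -> is_barcode f' ->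
  crit_wedge f = crit_wedge f' ->
  forall p : nat, (1 <= p)%N ->
    birth (wedge p f) = birth (wedge p f') /\
    death (wedge p f) = death (wedge p f').
Proof.
move=> Hf Hf' Hc p Hp.
have Hsz : size f = size f' by apply/eqP; rewrite eqn_leq (size_le Hf Hf' Hc) (size_le Hf' Hf (esym Hc)).
have Hsort : sort <=%R (map fst f) = sort <=%R (map fst f').
  apply: prefix_eq; first by rewrite !size_sort !size_map.
  by move=> q; rewrite size_sort size_map => Hq; apply: (mm_eq Hf Hf' Hc Hsz Hq).
have Hperm : perm_eq (map fst f) (map fst f').
  apply: perm_trans (_ : perm_eq _ (sort <=%R (map fst f))) _.
    by rewrite perm_sym perm_sort.
  by rewrite Hsort perm_sort.
have Hb : birth (wedge p f) = birth (wedge p f').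
  apply: FunctionalExtensionality.functional_extensionality => g.
  by rewrite !birthE; congr Posz; apply/permP; apply: perm_PP.
split => //.
have Hcp : crit (wedge p f) = crit (wedge p f').
  by case: p Hp {Hb} => [|q] // _; have := congr1 (fun F => F q.+1) Hc.
apply: FunctionalExtensionality.functional_extensionality => g.
have E1 : death (wedge p f) g = birth (wedge p f) g - crit (wedge p f) g.
  by rewrite /crit opprB addrC subrK.
have E2 : death (wedge p f') g = birth (wedge p f') g - crit (wedge p f') g.
  by rewrite /crit opprB addrC subrK.
by rewrite E1 E2 Hb Hcp.
Qed.
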